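(* Let $k\ge0$ and let $s$ be the singular factor of length $q_k$ of slope $\alpha$. Then (i) $s$ begins and ends with the same letter; (ii) $s$ is a palindrome; and (iii) the Parikh vectors of the proper prefixes and of the proper suffixes of $s$ are contained in the Parikh vector of every factor of slope $\alpha$ of length $q_k$.
   Context: $\alpha\in(0,1)$ irrational, $\alpha=[0;a_1,a_2,\ldots]$ with positive integers $a_i$, $a_1\ge2$; $q_0=1$, $q_1=a_1$, $q_k=a_kq_{k-1}+q_{k-2}$ ($k\ge2$). Identify the circle $\mathbb{T}$ with $[0,1)$, $R(\rho)=\{\rho+\alpha\}$; fix one convention, $I_0=[0,1-\alpha)$, $I_1=[1-\alpha,1)$ or $I_0=(0,1-\alpha]$, $I_1=(1-\alpha,1]$. $\mathbf{s}_{\rho,\alpha}$ has $n$-th letter $0$ if $R^n(\rho)\in I_0$ and $1$ otherwise; all such words share the set $\mathcal{L}_\alpha$ of finite factors (factors of slope $\alpha$). For $w=b_0\cdots b_{n-1}\in\mathcal{L}_\alpha$, $[w]=\bigcap_{i=0}^{n-1}R^{-i}(I_{b_i})$, so $\mathbf{s}_{\rho,\alpha}$ begins with $w$ iff $\rho\in[w]$; the intervals $[w]$ with $|w|=n$ are the $n+1$ arcs cut out by $0,\{-\alpha\},\ldots,\{-n\alpha\}$. The singular factor of length $q_k$ is the unique $s\in\mathcal{L}_\alpha$ of length $q_k$ whose interval $[s]$ has endpoints $0$ and $\{-q_k\alpha\}$. A proper prefix (suffix) of $s$ is a nonempty prefix (suffix) different from $s$. The Parikh vector of a binary word $u$ is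 $(|u|_0,|u|_1)$; $P$ is contained in $Q$ if $P\le Q$ componentwise and $P\ne Q$. *)

(* Defs.v *)
From Stdlib Require Import Reals.
From mathcomp Require Import ssreflect ssrbool ssrfun eqtype ssrnat seq.

Set Implicit Arguments.
Unset Strict Implicit.

Fixpoint gauss (alpha : R) (n : nat) : R :=
  match n with
  | O => alpha
  | S m => frac_part (/ gauss alpha m)
  end.

(* partial quotients: cf_a alpha (n+1) = floor (1 / T^n alpha), so that
   alpha = [0; cf_a alpha 1, cf_a alpha 2, ...].  (cf_a alpha 0 = 0.) *)
Definition cf_a (alpha : R) (n : nat) : nat :=
  match n with
  | O => 0
  | S m => Z.to_nat (Int_part (/ gauss alpha m))
  end.

(* (q_k, q_{k+1}) with q_0 = 1, q_1 = a_1, q_k = a_k q_{k-1} + q_{k-2}. *)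
Fixpoint cf_q_pair (alpha : R) (k : nat) : nat * nat :=
  match k with
  | O => (1, cf_a alpha 1)
  | S m => let p := cf_q_pair alpha m in
           (p.2, cf_a alpha (m.+2) * p.2 + p.1)
  end.

Definition cf_q (alpha : R) (k : nat) : nat := (cf_q_pair alpha k).1.

Definition irrational (x : R) : Prop :=
  forall (p q : Z), q <> 0%Z -> x <> (IZR p / IZR q)%R.

(* Convention flag conv:
   conv = false : circle = [0,1), I_0 = [0,1-alpha), I_1 = [1-alpha,1);
   conv = true  : circle = (0,1], I_0 = (0,1-alpha], I_1 = (1-alpha,1].
   Letters: false = 0, true = 1. *)
Definition fracu (x : R) : R := (1 - frac_part (- x))%R.  (* representative in (0,1] *)

Definition letter (conv : bool) (alpha rho : R) (n : nat) : bool :=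
  let x := (rho + INR n * alpha)%R in
  if conv then
    (if Rlt_dec (1 - alpha) (fracu x) then true else false)
  else
    (if Rle_dec (1 - alpha) (frac_part x) then true else false).

Definition factor (conv : bool) (alpha : R) (w : seq bool) : Prop :=
  exists (rho : R) (m : nat),
    w = mkseq (fun i => letter conv alpha rho (m + i)) (size w).

Definition in_cyl (conv : bool) (alpha : R) (w : seq bool) (rho : R) : Prop :=
  mkseq (fun i => letter conv alpha rho i) (size w) = w.

(* s is a singular factor of length q_k: s is a factor of length q_k whose
   interval [s] has endpoints 0 and beta = {-q_k alpha}, i.e. (up to the
   endpoints themselves) [s] is one of the two arcs determined by 0 and beta. *)
Definition singular_factor (conv : bool) (alpha : R) (k : nat) (s : seq bool) : Prop :=
  factor conv alpha s /\ size s = cf_q alpha k /\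
  let beta := frac_part (- (INR (cf_q alpha k) * alpha)) in
  ((forall rho, (0 < rho < 1)%R -> rho <> beta -> (in_cyl conv alpha s rho <-> (rho < beta)%R))
   \/
   (forall rho, (0 < rho < 1)%R -> rho <> beta -> (in_cyl conv alpha s rho <-> (beta < rho)%R))).

Definition parikh (u : seq bool) : nat * nat := (count negb u, count (fun b : bool => b) u).

Definition parikh_contained (P Q : nat * nat) : Prop :=
  (P.1 <= Q.1)%N /\ (P.2 <= Q.2)%N /\ P <> Q.

Definition proper_prefix (u s : seq bool) : Prop :=
  exists i, (0 < i < size s)%N /\ u = take i s.

Definition proper_suffix (u s : seq bool) : Prop :=
  exists i, (0 < i < size s)%N /\ u = drop i s.

(* Main.v *)
Require Import Defs.
From Stdlib Require Import Reals.
From Stdlib Require Import Lra Lia ZArith.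
From mathcomp Require Import ssreflect ssrbool ssrfun eqtype ssrnat seq.
From mathcomp Require Import zify.

Section Helpers.

Local Open Scope R_scope.

Lemma Fl_spec x : IZR (Int_part x) <= x < IZR (Int_part x) + 1.
Proof. have [h1 h2] := base_Int_part x. lra. Qed.

Lemma Fl_unique (z : Z) x : IZR z <= x < IZR z + 1 -> Int_part x = z.
Proof.
move=> [h1 h2]. have e : (z + 1)%Z = up x.
  apply: tech_up; rewrite plus_IZR; lra.
rewrite /Int_part -e. lia.
Qed.

Lemma Fl_shift (K : Z) y : Int_part (IZR K + y) = (K + Int_part y)%Z.
Proof. apply: Fl_unique. have := Fl_spec y. rewrite plus_IZR. lra. Qed.

Lemma Fl_opp x : (forall K, x <> IZR K) -> Int_part (- x) = (- Int_part x - 1)%Z.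
Proof.
move=> h. apply: Fl_unique. have := Fl_spec x. have := h (Int_part x).
rewrite minus_IZR opp_IZR. move=> hn [h1 h2].
have h3 : IZR (Int_part x) < x by destruct h1 => //; congruence.
lra.
Qed.

Definition lt (c : bool) (a x : R) : bool :=
  if c then (if Rlt_dec (1 - a) (fracu x) then true else false)
  else (if Rle_dec (1 - a) (frac_part x) then true else false).

Lemma letter_lt c a rho n : letter c a rho n = lt c a (rho + INR n * a).
Proof. by []. Qed.

Lemma lt_false_Z a x : 0 < a < 1 ->
  Z.of_nat (nat_of_bool (lt false a x)) = (Int_part (x + a) - Int_part x)%Z.
Proof.
move=> ha. have hs := Fl_spec x. rewrite /lt /frac_part.
case: Rle_dec => h /=.
  rewrite (Fl_unique (Int_part x + 1) (x + a)); [lia| rewrite plus_IZR; lra].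
rewrite (Fl_unique (Int_part x) (x + a)); [lia| lra].
Qed.

Lemma lt_true_Z a x : 0 < a < 1 ->
  Z.of_nat (nat_of_bool (lt true a x)) = (Int_part (- x) - Int_part (- x - a))%Z.
Proof.
move=> ha. have hs := Fl_spec (- x). rewrite /lt /fracu /frac_part.
case: Rlt_dec => h /=.
  rewrite (Fl_unique (Int_part (-x) - 1) (- x - a)); [lia| rewrite minus_IZR; lra].
rewrite (Fl_unique (Int_part (-x)) (- x - a)); [lia| lra].
Qed.

Lemma b2Z_inj (b1 b2 : bool) : Z.of_nat (nat_of_bool b1) = Z.of_nat (nat_of_bool b2) -> b1 = b2.
Proof. by case: b1; case: b2. Qed.

Lemma lt_Z c a x : 0 < a < 1 ->
  Z.of_nat (nat_of_bool (lt c a x)) =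
  if c then (Int_part (- x) - Int_part (- x - a))%Z else (Int_part (x + a) - Int_part x)%Z.
Proof. case: c; [exact: lt_true_Z | exact: lt_false_Z]. Qed.

Lemma lt_generic c a x : 0 < a < 1 -> (forall K, x <> IZR K) -> (forall K, x + a <> IZR K) ->
  lt c a x = lt false a x.
Proof.
move=> ha h1 h2. case: c => //. apply: b2Z_inj. rewrite lt_true_Z // lt_false_Z //.
replace (- x - a) with (- (x + a)) by ring.
rewrite Fl_opp // Fl_opp //. lia.
Qed.

Lemma lt_refl c a (K : Z) y : 0 < a < 1 -> lt c a (IZR K - a - y) = lt (~~ c) a y.
Proof.
move=> ha. apply: b2Z_inj. rewrite !lt_Z //. case: c => /=.
  replace (- (IZR K - a - y) - a) with (IZR (- K) + y) by (rewrite opp_IZR; ring).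
  replace (- (IZR K - a - y)) with (IZR (- K) + (y + a)) by (rewrite opp_IZR; ring).
  rewrite !Fl_shift. lia.
replace (IZR K - a - y + a) with (IZR K + (- y)) by ring.
replace (IZR K - a - y) with (IZR K + (- y - a)) by ring.
rewrite !Fl_shift. lia.
Qed.

Local Open Scope R_scope.

Lemma count_rcons_b (l : seq bool) (x : bool) :
  count (fun b : bool => b) (rcons l x) = (count (fun b : bool => b) l + x)%N.
Proof. by rewrite -cats1 count_cat /= addn0. Qed.

Lemma window_Z c a x m : 0 < a < 1 ->
  Z.of_nat (count (fun b : bool => b) (mkseq (fun i => lt c a (x + INR i * a)) m)) =
  if c then (Int_part (- x) - Int_part (- x - INR m * a))%Z
  else (Int_part (x + INR m * a) - Int_part x)%Z.
Proof.
move=> ha. elim: m => [|m IH].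
  rewrite /=. case: c => /=; rewrite Rmult_0_l ?Rplus_0_r ?Rminus_0_r; lia.
rewrite mkseqS count_rcons_b Nat2Z.inj_add IH lt_Z // S_INR.
move: IH; case: c => _.
  replace (- (x + INR m * a) - a) with (- x - (INR m + 1) * a) by ring.
  replace (- (x + INR m * a)) with (- x - INR m * a) by ring. lia.
replace (x + INR m * a + a) with (x + (INR m + 1) * a) by ring. lia.
Qed.

Lemma window_bound a n z : 
  let c := (- Int_part (- (INR n * a)) - 1)%Z in
  (c <= Int_part (z + INR n * a) - Int_part z <= c + 1)%Z.
Proof.
move=> c. have h1 := Fl_spec (- (INR n * a)). have h2 := Fl_spec z.
have h3 := Fl_spec (z + INR n * a).
have hc : IZR c = - IZR (Int_part (- (INR n * a))) - 1 by rewrite /c minus_IZR opp_IZR.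
split.
  have : IZR (Int_part z + c - 1) < IZR (Int_part (z + INR n * a)).
    rewrite minus_IZR (plus_IZR (Int_part z) c). lra.
  move/lt_IZR. lia.
have : IZR (Int_part (z + INR n * a)) < IZR (Int_part z + c + 2).
  rewrite (plus_IZR (Int_part z + c) 2) (plus_IZR (Int_part z) c). lra.
move/lt_IZR. lia.
Qed.

Lemma nonint a p q rho : 0 < a < 1 -> irrational a -> q <> 0%Z -> rho = IZR p / IZR q ->
  0 < rho < 1 -> forall (j : nat) (K : Z), rho + INR j * a <> IZR K.
Proof.
move=> ha hirr hq hr hr01 j K. case: j => [|j].
  rewrite Rmult_0_l Rplus_0_r => e. rewrite e in hr01.
  case: hr01 => /lt_IZR h1 /lt_IZR h2. lia.
move=> e. apply: (hirr (K * q - p)%Z (q * Z.of_nat j.+1)%Z); first lia.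
have hq' : IZR q <> 0 by apply: not_0_IZR.
have hj : INR j.+1 <> 0 by apply: not_0_INR.
rewrite mult_IZR minus_IZR mult_IZR -INR_IZR_INZ.
have : a = (IZR K - rho) / INR j.+1 by rewrite -e; field.
move=> ->. rewrite hr. field. split => //.
Qed.

Lemma cf_q_pos a k : (2 <= cf_a a 1)%N -> (0 < cf_q a k)%N.
Proof.
move=> h. suff: (0 < (cf_q_pair a k).1)%N /\ (0 < (cf_q_pair a k).2)%N by case.
elim: k => [|k [IH1 IH2]] /=.
  split => //. exact: leq_trans h.
split => //. exact: leq_trans IH1 (leq_addl _ _).
Qed.

Local Open Scope R_scope.

Lemma cnt_split (l : seq bool) : (count negb l + count (fun b : bool => b) l = size l)%N.
Proof. elim: l => //= x l IH. case: x => /=; lia. Qed.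

Lemma count_take_le (p : pred bool) i (l : seq bool) : (count p (take i l) <= count p l)%N.
Proof. rewrite -{2}(cat_take_drop i l) count_cat. exact: leq_addr. Qed.

Lemma parikh_rev l : parikh (rev l) = parikh l.
Proof. by rewrite /parikh !count_rev. Qed.

Lemma head_rev_last (l : seq bool) : head false (rev l) = last false l.
Proof. by case/lastP: l => [|l x] //; rewrite rev_rcons last_rcons. Qed.

Lemma factor_count conv a n w : 0 < a < 1 -> factor conv a w -> size w = n ->
  let c := (- Int_part (- (INR n * a)) - 1)%Z in
  (c <= Z.of_nat (count (fun b : bool => b) w) <= c + 1)%Z.
Proof.
move=> ha [rw [m Hw]] Hn c. rewrite Hn in Hw.
have -> : w = mkseq (fun i => lt conv a ((rw + INR m * a) + INR i * a)) n.
  rewrite Hw. apply: eq_mkseq => i. rewrite letter_lt. f_equal.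
  rewrite (plus_INR m i). ring.
rewrite window_Z //. clear Hw. case: conv.
  have := window_bound a n (- (rw + INR m * a) - INR n * a).
  replace (- (rw + INR m * a) - INR n * a + INR n * a) with (- (rw + INR m * a)) by ring.
  done.
exact: window_bound.
Qed.

Local Open Scope R_scope.

Lemma core conv a n s rho rho' p q (e : Z) (b : bool) :
  0 < a < 1 -> irrational a -> (0 < n)%N -> size s = n ->
  q <> 0%Z -> rho = IZR p / IZR q -> 0 < rho < 1 ->
  in_cyl conv a s rho -> in_cyl conv a s rho' ->
  rho + rho' = frac_part (- (INR n * a)) + IZR e ->
  lt false a rho = b ->
  Int_part (rho + INR n * a) = (- Int_part (- (INR n * a)) - 1 + Z.of_nat b)%Z ->
  (s <> [::] /\ head false s = last false s) /\
  rev s = s /\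
  (forall u w : seq bool,
     (proper_prefix u s \/ proper_suffix u s) ->
     factor conv a w -> size w = n ->
     parikh_contained (parikh u) (parikh w)).
Proof.
move=> ha hirr hn Hsz hq hr hr01 Hc1 Hc2 Hsum Hb Hcnt.
have NI := @nonint a p q rho ha hirr hq hr hr01.
have Hgen : forall c i, lt c a (rho + INR i * a) = lt false a (rho + INR i * a).
  move=> c i. apply: lt_generic => //.
  replace (rho + INR i * a + a) with (rho + INR i.+1 * a) by (rewrite S_INR; ring).
  exact: NI.
have Hs1 : s = mkseq (fun i => lt false a (rho + INR i * a)) n.
  move: Hc1; rewrite /in_cyl Hsz => <-. apply: eq_mkseq => i. by rewrite letter_lt Hgen.
have Hs2 : s = mkseq (fun i => lt conv a (rho' + INR i * a)) n.
  move: Hc2; rewrite /in_cyl Hsz => <-. apply: eq_mkseq => i. by rewrite letter_lt.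
have Hpal : rev s = s.
  apply: (@eq_from_nth _ false); first by rewrite size_rev.
  move=> i; rewrite size_rev Hsz => hi. rewrite nth_rev ?Hsz //.
  rewrite {1}Hs1 {1}Hs2 !nth_mkseq //; last by lia.
  set j := (n - i.+1)%N.
  have hnj : n = (i.+1 + j)%N by rewrite /j; lia.
  have hINR : INR n = INR i + 1 + INR j by rewrite hnj (plus_INR i.+1 j) S_INR.
  move: Hsum. rewrite /frac_part. set F := Int_part (- (INR n * a)). move=> Hsum.
  have -> : rho' + INR i * a = IZR (e - F) - a - (rho + INR j * a).
    have -> : rho' = - (INR n * a) - IZR F + IZR e - rho by lra.
    rewrite hINR minus_IZR. ring.
  by rewrite lt_refl // Hgen.
have Hb0 : head false s = b.
  rewrite Hs1. case: n hn {Hsz Hs1 Hs2 Hcnt Hsum} => // n _.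
  rewrite -nth0 nth_mkseq // Rmult_0_l Rplus_0_r. done.
have Hhd : head false s = last false s by rewrite -{1}Hpal head_rev_last.
have Hint0 : Int_part rho = 0%Z by apply: Fl_unique; lra.
have HcS : Z.of_nat (count (fun b : bool => b) s) = (- Int_part (- (INR n * a)) - 1 + Z.of_nat b)%Z.
  rewrite {1}Hs1 window_Z //. lia.
have [s' Es] : exists s', s = rcons s' b.
  move: Hhd Hb0 Hsz hn. case/lastP: s {Hs1 Hs2 Hpal HcS Hc1 Hc2} => [|s' x] //.
    by move=> _ _ <-.
  rewrite last_rcons => -> <- _ _. by exists s'.
have Hs'sz : size s' = (n - 1)%N by move: Hsz; rewrite Es size_rcons; lia.
have Hct : Z.of_nat (count (fun b : bool => b) s') = (- Int_part (- (INR n * a)) - 1)%Z.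
  move: HcS; rewrite Es count_rcons_b. lia.
have Hpre : forall i w, (0 < i < n)%N -> factor conv a w -> size w = n ->
    parikh_contained (parikh (take i s)) (parikh w).
  move=> i w hi hw hwn.
  have := @factor_count conv a n w ha hw hwn. move=> /= hcw.
  have -> : take i s = take i s' by rewrite Es -cats1 takel_cat //; lia.
  have h1 := count_take_le negb i s'. have h2 := count_take_le (fun b : bool => b) i s'.
  have h3 := cnt_split (take i s'). have h4 := cnt_split s'. have h5 := cnt_split w.
  rewrite size_take in h3.
  rewrite /parikh_contained /parikh /=.
  split; [|split].
  - lia.
  - lia.
  - case=> e1 e2. move: h3. rewrite e1 e2 h5. case: ifP; lia.
split.
  split; last exact: Hhd.
  by move=> E; rewrite E /= in Hsz; rewrite -Hsz in hn.
split; first exact: Hpal.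
move=> u w [[i [hi ->]] | [i [hi ->]]] hw hwn.
  apply: Hpre => //; by rewrite -Hsz.
rewrite -Hpal drop_rev parikh_rev. apply: Hpre => //. rewrite Hsz in hi *. lia.
Qed.
End Helpers.

Theorem lemma2p5 (conv : bool) (alpha : R)
  (Ha : (0 < alpha < 1)%R) (Hirr : irrational alpha)
  (Ha1 : (2 <= cf_a alpha 1)%N)
  (k : nat) (s : seq bool) (Hs : singular_factor conv alpha k s) :
  (s <> [::] /\ head false s = last false s) /\
  rev s = s /\
  (forall u w : seq bool,
     (proper_prefix u s \/ proper_suffix u s) ->
     factor conv alpha w -> size w = cf_q alpha k ->
     parikh_contained (parikh u) (parikh w)).
Proof.
Local Open Scope R_scope.
have hn := @cf_q_pos alpha k Ha1.
move: Hs. rewrite /singular_factor. set n := cf_q alpha k.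
move=> [_ [Hsz Hcyl]]. move: Hcyl.
set beta := frac_part (- (INR n * alpha)).
have hnR : 0 < INR n by apply: lt_0_INR; apply/ltP.
have hF := Fl_spec (- (INR n * alpha)).
have hbeta_def : beta = - (INR n * alpha) - IZR (Int_part (- (INR n * alpha))) by [].
have [hb0 hb1] := base_fp (- (INR n * alpha)).
have hbne : beta <> 0.
  move=> e. refine (Hirr (- Int_part (- (INR n * alpha)))%Z (Z.of_nat n) _ _).
    lia.
  rewrite opp_IZR -INR_IZR_INZ. move: e; rewrite hbeta_def => e. field_simplify_eq; [lra|lra].
have hbeta : 0 < beta < 1 by move: hb0 hb1; rewrite -/beta; lra.
set F := Int_part (- (INR n * alpha)) in hF hbeta_def.
case=> HC.
- have heps : 0 < Rmin beta (1 - alpha) by apply: Rmin_pos; lra.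
  have [N [hN1 hN2]] := archimed_cor1 _ heps.
  have hNR : 0 < INR N by apply: lt_0_INR.
  have hNi : 0 < / INR N by apply: Rinv_0_lt_compat.
  have hm1 := Rmin_l beta (1 - alpha). have hm2 := Rmin_r beta (1 - alpha).
  set rho := / INR N.
  have hr01 : 0 < rho < 1 by rewrite /rho; lra.
  apply: (@core conv alpha n s rho (beta - rho) 1 (Z.of_nat N) 0 false) => //.
  + lia.
  + rewrite /rho -INR_IZR_INZ. field. lra.
  + apply/(HC rho) => //; rewrite /rho; lra.
  + apply/(HC (beta - rho)); rewrite /rho; lra.
  + change (frac_part (- (INR n * alpha))) with beta; rewrite /rho; lra.
  + rewrite /lt /frac_part (Fl_unique 0 rho); last (rewrite /rho; lra).
    case: Rle_dec => // h; exfalso; rewrite /rho in h; lra.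
  + apply: Fl_unique. rewrite -/F /rho plus_IZR minus_IZR opp_IZR /=. lra.
- have heps : 0 < Rmin (1 - beta) alpha by apply: Rmin_pos; lra.
  have [N [hN1 hN2]] := archimed_cor1 _ heps.
  have hNR : 0 < INR N by apply: lt_0_INR.
  have hNi : 0 < / INR N by apply: Rinv_0_lt_compat.
  have hm1 := Rmin_l (1 - beta) alpha. have hm2 := Rmin_r (1 - beta) alpha.
  set rho := 1 - / INR N.
  have hr01 : 0 < rho < 1 by rewrite /rho; lra.
  apply: (@core conv alpha n s rho (beta + / INR N) (Z.of_nat N - 1) (Z.of_nat N) 1 true) => //.
  + lia.
  + rewrite /rho minus_IZR -INR_IZR_INZ. field. lra.
  + apply/(HC rho) => //; rewrite /rho; lra.
  + apply/(HC (beta + / INR N)); rewrite /rho; lra.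
  + change (frac_part (- (INR n * alpha))) with beta; rewrite /rho; lra.
  + rewrite /lt /frac_part (Fl_unique 0 rho); last (rewrite /rho; lra).
    case: Rle_dec => // h; exfalso; rewrite /rho in h; lra.
  + apply: Fl_unique. rewrite -/F. have -> : (- F - 1 + Z.of_nat true = - F)%Z by simpl; lia.
    rewrite /rho opp_IZR. lra.
Qed.
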